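(* Let $P_0,P_1,Q_2\in\mathbb H$ be pairwise distinct with $\langle P_0,P_1\rangle=\langle P_0,Q_2\rangle=\langle P_1,Q_2\rangle$ (i.e. $P_0P_1Q_2$ is equilateral). Then there is $\varepsilon_2\in\{-1,1\}$ such that $$Q_2=\frac{-\langle P_0,P_1\rangle(P_0+P_1)+\varepsilon_2\sqrt{1-2\langle P_0,P_1\rangle}\,P_0\tilde\times P_1}{1-\langle P_0,P_1\rangle}.$$
   Context: $\langle v,w\rangle=-v_1w_1+v_2w_2+v_3w_3$ on $\mathbb R^3$; $\mathbb H=\{P\in\mathbb R^3:\langle P,P\rangle=-1,\ P_1\ge1\}$; $v\tilde\times w:=J(v\times w)$ with $J=\mathrm{diag}(-1,1,1)$ and $\times$ the Euclidean cross product. *)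

(* Defs.v *)
From Stdlib Require Import Reals.
Open Scope R_scope.

Definition vec3 : Type := (R * R * R)%type.

Definition v1 (v : vec3) : R := fst (fst v).
Definition v2 (v : vec3) : R := snd (fst v).
Definition v3 (v : vec3) : R := snd v.

Definition lor (v w : vec3) : R := - v1 v * v1 w + v2 v * v2 w + v3 v * v3 w.

Definition inH (P : vec3) : Prop := lor P P = -1 /\ 1 <= v1 P.

Definition cross (v w : vec3) : vec3 :=
  (v2 v * v3 w - v3 v * v2 w, v3 v * v1 w - v1 v * v3 w, v1 v * v2 w - v2 v * v1 w).

Definition Jmap (v : vec3) : vec3 := (- v1 v, v2 v, v3 v).

Definition lcross (v w : vec3) : vec3 := Jmap (cross v w).

Definition vadd (v w : vec3) : vec3 := (v1 v + v1 w, v2 v + v2 w, v3 v + v3 w).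
Definition vscale (a : R) (v : vec3) : vec3 := (a * v1 v, a * v2 v, a * v3 v).

(* Main.v *)
Require Import Defs.
From Stdlib Require Import Reals Lra Psatz.
Open Scope R_scope.

Lemma null_orth p1 p2 p3 d1 d2 d3 :
  -p1*p1+p2*p2+p3*p3 = -1 -> -p1*d1+p2*d2+p3*d3 = 0 -> -d1*d1+d2*d2+d3*d3 = 0 ->
  d1 = 0 /\ d2 = 0 /\ d3 = 0.
Proof.
  intros Hp Hd Hn.
  assert (C: (p2*d2+p3*d3)^2 + (p2*d3-p3*d2)^2 = (p2*p2+p3*p3)*(d2*d2+d3*d3)) by ring.
  assert (E1: p2*d2+p3*d3 = p1*d1) by lra.
  rewrite E1 in C.
  assert (E2: d2*d2+d3*d3 = d1*d1) by lra.
  assert (E3: p2*p2+p3*p3 = p1*p1-1) by lra.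
  rewrite E2, E3 in C.
  assert (d1*d1 <= 0) by (pose proof (pow2_ge_0 (p2*d3-p3*d2)); nra).
  assert (d1 = 0) by nra. subst d1. split; [reflexivity|]. split; nra.
Qed.

Lemma scalar_main p1 p2 p3 q1 q2 q3 z1 z2 z3 :
  -p1*p1+p2*p2+p3*p3 = -1 -> -q1*q1+q2*q2+q3*q3 = -1 -> -z1*z1+z2*z2+z3*z3 = -1 ->
  let a := -p1*q1+p2*q2+p3*q3 in
  a*a <> 1 ->
  -p1*z1+p2*z2+p3*z3 = a -> -q1*z1+q2*z2+q3*z3 = a ->
  let n1 := p2*q3-p3*q2 in let n2 := p3*q1-p1*q3 in let n3 := p1*q2-p2*q1 in
  exists u, u*u = 1-2*a /\
    z1 = /(1-a) * (-a*(p1+q1) + u*(-n1)) /\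
    z2 = /(1-a) * (-a*(p2+q2) + u*n2) /\
    z3 = /(1-a) * (-a*(p3+q3) + u*n3).
Proof.
  intros Hp Hq Hz a Ha2 H0 H1 n1 n2 n3.
  assert (Ha1: a - 1 <> 0) by (intro E; apply Ha2; replace a with 1 by lra; ring).
  assert (Ha1': 1 - a <> 0) by lra.
  pose (c := a/(a-1)).
  pose (r1 := z1 - c*(p1+q1)). pose (r2 := z2 - c*(p2+q2)). pose (r3 := z3 - c*(p3+q3)).
  assert (O0: -p1*r1+p2*r2+p3*r3 = 0).
  { replace (-p1*r1+p2*r2+p3*r3) with ((-p1*z1+p2*z2+p3*z3) - c*((-p1*p1+p2*p2+p3*p3) + a))
      by (unfold r1, r2, r3, a; ring).
    rewrite H0, Hp. unfold c. field. exact Ha1. }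
  assert (O1: -q1*r1+q2*r2+q3*r3 = 0).
  { replace (-q1*r1+q2*r2+q3*r3) with ((-q1*z1+q2*z2+q3*z3) - c*(a + (-q1*q1+q2*q2+q3*q3)))
      by (unfold r1, r2, r3, a; ring).
    rewrite H1, Hq. unfold c. field. exact Ha1. }
  assert (NN: -n1*n1+n2*n2+n3*n3 = a*a-1).
  { replace (-n1*n1+n2*n2+n3*n3) with (a*a - (-p1*p1+p2*p2+p3*p3)*(-q1*q1+q2*q2+q3*q3))
      by (unfold n1, n2, n3, a; ring).
    rewrite Hp, Hq. ring. }
  pose (nn := n1*n1+n2*n2+n3*n3).
  assert (Hnn: nn <> 0).
  { intro E. unfold nn in E.
    assert (n1 = 0) by nra. assert (n2 = 0) by nra. assert (n3 = 0) by nra.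
    apply Ha2. rewrite H, H2, H3 in NN. lra. }
  pose (s := (-r1)*n1 + r2*n2 + r3*n3).
  pose (e0 := -p1*r1+p2*r2+p3*r3). pose (e1 := -q1*r1+q2*r2+q3*r3).
  pose (w1 := e1*p1 - e0*q1). pose (w2 := e1*p2 - e0*q2). pose (w3 := e1*p3 - e0*q3).
  assert (Hw1: w1 = 0) by (unfold w1, e0, e1; rewrite O0, O1; ring).
  assert (Hw2: w2 = 0) by (unfold w2, e0, e1; rewrite O0, O1; ring).
  assert (Hw3: w3 = 0) by (unfold w3, e0, e1; rewrite O0, O1; ring).
  assert (P1: (-r1)*nn - s*n1 = n2*w3 - n3*w2) by (unfold nn, s, w2, w3, e0, e1, n1, n2, n3; ring).
  assert (P2: r2*nn - s*n2 = n3*w1 - n1*w3) by (unfold nn, s, w1, w3, e0, e1, n1, n2, n3; ring).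
  assert (P3: r3*nn - s*n3 = n1*w2 - n2*w1) by (unfold nn, s, w1, w2, e0, e1, n1, n2, n3; ring).
  rewrite Hw1, Hw2, Hw3 in *.
  pose (t := s/nn).
  assert (R1: r1 = t*(-n1)).
  { replace r1 with ((r1*nn)/nn) by (field; exact Hnn).
    replace (r1*nn) with (s*(-n1)) by lra. unfold t. field. exact Hnn. }
  assert (R2: r2 = t*n2).
  { replace r2 with ((r2*nn)/nn) by (field; exact Hnn).
    replace (r2*nn) with (s*n2) by lra. unfold t. field. exact Hnn. }
  assert (R3: r3 = t*n3).
  { replace r3 with ((r3*nn)/nn) by (field; exact Hnn).
    replace (r3*nn) with (s*n3) by lra. unfold t. field. exact Hnn. }
  assert (LR: -r1*r1+r2*r2+r3*r3 = -1 - c*c*(2*a-2)).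
  { replace (-r1*r1+r2*r2+r3*r3) with ((-z1*z1+z2*z2+z3*z3) - 2*c*((-p1*r1+p2*r2+p3*r3)+(-q1*r1+q2*r2+q3*r3))
       - c*c*((-p1*p1+p2*p2+p3*p3) + 2*a + (-q1*q1+q2*q2+q3*q3))) by (unfold r1, r2, r3, a; ring).
    rewrite Hz, O0, O1, Hp, Hq. ring. }
  assert (T: t*t*(a*a-1) = -1 - c*c*(2*a-2)).
  { rewrite <- LR, R1, R2, R3, <- NN. ring. }
  assert (Haa: a*a-1 <> 0) by (intro E; apply Ha2; lra).
  exists (t*(1-a)). split.
  - apply (Rmult_eq_reg_r (a*a-1)); [|exact Haa].
    replace (t*(1-a)*(t*(1-a))*(a*a-1)) with ((1-a)*(1-a)*(t*t*(a*a-1))) by ring.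
    rewrite T. unfold c. field. exact Ha1.
  - assert (Z1: z1 = c*(p1+q1) + r1) by (unfold r1; ring).
    assert (Z2: z2 = c*(p2+q2) + r2) by (unfold r2; ring).
    assert (Z3: z3 = c*(p3+q3) + r3) by (unfold r3; ring).
    rewrite Z1, Z2, Z3, R1, R2, R3. unfold c.
    split; [|split]; field; split; assumption.
Qed.

Theorem corollary2p3 (P0 P1 Q2 : vec3) :
  inH P0 -> inH P1 -> inH Q2 ->
  P0 <> P1 -> P0 <> Q2 -> P1 <> Q2 ->
  lor P0 P1 = lor P0 Q2 -> lor P0 P1 = lor P1 Q2 ->
  exists eps2 : R, (eps2 = 1 \/ eps2 = -1) /\
    Q2 = vscale (/ (1 - lor P0 P1))
           (vadd (vscale (- lor P0 P1) (vadd P0 P1))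
                 (vscale (eps2 * sqrt (1 - 2 * lor P0 P1)) (lcross P0 P1))).
Proof.
  destruct P0 as [[p1 p2] p3], P1 as [[q1 q2] q3], Q2 as [[z1 z2] z3].
  unfold inH, lor, vscale, vadd, lcross, Jmap, cross, v1, v2, v3; simpl.
  intros [Hp Hp1] [Hq Hq1] [Hz Hz1] D01 _ _ E0 E1.
  assert (Ha2: (-p1*q1+p2*q2+p3*q3)*(-p1*q1+p2*q2+p3*q3) <> 1).
  { intro E.
    destruct (Rle_dec 0 (-p1*q1+p2*q2+p3*q3)).
    - assert (Ea: -p1*q1+p2*q2+p3*q3 = 1) by nra.
      destruct (null_orth p1 p2 p3 (p1+q1) (p2+q2) (p3+q3)) as [F _]; try lra; nra.
    - assert (Ea: -p1*q1+p2*q2+p3*q3 = -1) by nra.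
      destruct (null_orth p1 p2 p3 (p1-q1) (p2-q2) (p3-q3)) as [F [F2 F3]]; try lra; try nra.
      apply D01. f_equal; [f_equal|]; lra. }
  destruct (scalar_main p1 p2 p3 q1 q2 q3 z1 z2 z3 Hp Hq Hz Ha2) as [u [Hu [Z1 [Z2 Z3]]]];
    [lra|lra|].
  assert (Sq: sqrt (1 - 2 * (-p1*q1+p2*q2+p3*q3)) = Rabs u).
  { rewrite <- Hu. rewrite <- sqrt_Rsqr_abs. reflexivity. }
  rewrite Sq.
  destruct (Rle_dec 0 u).
  - exists 1. split; [left; reflexivity|]. rewrite Rabs_right by lra.
    rewrite Z1, Z2, Z3. f_equal; [f_equal|]; ring.
  - exists (-1). split; [right; reflexivity|]. rewrite Rabs_left by lra.
    rewrite Z1, Z2, Z3. f_equal; [f_equal|]; ring.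
Qed.
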